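(* Let $k\ge2$ and define $n_0(k)=2k+1$ for $k\ge3$ and $n_0(2)=6$. Then $\chi_D(LG_1(k,n))=3$ for all $n\ge n_0(k)$.
   Context: For integers $n,k$ with $2k<n$, $LG_1(k,n)$ is the bipartite graph with parts $L=\binom{[n]}{k-1}$ (the $(k-1)$-subsets of $[n]$) and $R=\binom{[n]}{k}$ (the $k$-subsets of $[n]$), where $u\in L$ and $v\in R$ are adjacent iff $u\subset v$. A coloring is distinguishing if the only graph automorphism mapping every color class onto itself is the identity; $\chi_D(G)$ is the minimum number of colors of a proper distinguishing coloring of $G$. *)

(* Defs.v *)
From HB Require Import structures.
From mathcomp Require Import all_boot all_order all_fingroup.
Set Implicit Arguments. Unset Strict Implicit. Unset Printing Implicit Defensive.

Definition graph_aut (T : finType) (e : rel T) (f : {perm T}) : Prop :=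
  forall x y, e (f x) (f y) = e x y.

Definition proper_col (T : finType) (e : rel T) (m : nat) (c : T -> 'I_m) : Prop :=
  forall x y, e x y -> c x != c y.

Definition distinguishing (T : finType) (e : rel T) (m : nat) (c : T -> 'I_m) : Prop :=
  forall f : {perm T}, graph_aut e f -> (forall x, c (f x) = c x) -> f = 1%g.

Definition has_pdc (T : finType) (e : rel T) (m : nat) : Prop :=
  exists c : T -> 'I_m, proper_col e c /\ distinguishing e c.

Definition chiD_is (T : finType) (e : rel T) (m : nat) : Prop :=
  has_pdc e m /\ forall m', has_pdc e m' -> m <= m'.

(* Vertices of LG_1(k,n): the (k-1)-subsets and k-subsets of [n] = 'I_n. *)
Definition LGvert (n k : nat) :=
  {A : {set 'I_n} | (#|A| == k.-1) || (#|A| == k)}.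

Definition LGadj (n k : nat) : rel (LGvert n k) :=
  fun u v => [&& #|val u| == k.-1, #|val v| == k & val u \subset val v]
          || [&& #|val v| == k.-1, #|val u| == k & val v \subset val u].

Definition n0 (k : nat) : nat := if k == 2 then 6 else (2 * k).+1.

(* Main.v *)
Require Import Defs.
From mathcomp Require Import all_boot all_order all_fingroup.
From mathcomp Require Import zify.
Set Implicit Arguments. Unset Strict Implicit. Unset Printing Implicit Defensive.

Section Rigid.
Variable n : nat.
Local Notation T := (ordinal n).
Implicit Types A B C X Y Z : {set T}.

Definition half (m : nat) (h h' : {set T} -> {set T}) :=
  (forall A : {set T}, #|A| = m -> #|h A| = m /\ h' (h A) = A) /\
  (forall A1 A2 A3 : {set T}, #|A1| = m -> #|A2| = m -> #|A3| = m ->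
     #|A1 :|: A2 :|: A3| <= m.+1 -> #|h A1 :|: h A2 :|: h A3| <= m.+1).
Definition good m h h' := half m h h' /\ half m h' h.

Lemma good_sym m h h' : good m h h' -> good m h' h.
Proof. by case. Qed.

Lemma two_elems (A : {set T}) : 1 < #|A| ->
  exists x y, [/\ x \in A, y \in A & x != y].
Proof.
move=> hA. have : 0 < #|A| by lia. case/card_gt0P=> x xA.
have : 0 < #|A :\ x| by rewrite (cardsD1 x A) xA in hA; lia.
case/card_gt0P=> y; rewrite !inE => /andP[yx yA]. by exists x, y; rewrite eq_sym.
Qed.

Lemma extend_set (A : {set T}) d : #|A| + d <= n ->
  exists B, A \subset B /\ #|B| = #|A| + d.
Proof.
elim: d A => [|d IH] A hA; first by exists A; rewrite addn0.
have hc := cardsC A; rewrite card_ord in hc.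
have : 0 < #|~: A| by lia.
case/card_gt0P=> x; rewrite inE => xA.
have [B [sB cB]] := IH (x |: A) ltac:(by rewrite cardsU1 xA; lia).
exists B; split; first by apply: subset_trans sB; apply: subsetUr.
by rewrite cB cardsU1 xA; lia.
Qed.

Lemma tri_core m (X Y Z : {set T}) : #|X| = m.+1 -> #|Y| = m.+1 -> #|Z| = m.+1 ->
  #|X :&: Y| = m -> #|X :&: Z| = m -> #|Y :&: Z| = m ->
  m.+3 <= #|X :|: Y :|: Z| -> X :&: Y \subset Z.
Proof.
move=> cX cY cZ cXY cXZ cYZ cU.
apply/idPn => nsub.
have h1 : #|X :&: Y :&: Z| < m.
  rewrite -cXY; apply: proper_card; rewrite properEneq subsetIl andbT.
  apply/negP => /eqP e; move/negP: nsub; apply; rewrite -e; exact: subsetIr.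
have e1 := cardsU (Z :&: X) (Z :&: Y).
have e2 : Z :&: X :|: Z :&: Y = Z :&: (X :|: Y).
  by apply/setP=> i; rewrite !inE; case: (i \in X); case: (i \in Y); case: (i \in Z).
have e3 : Z :&: X :&: (Z :&: Y) = X :&: Y :&: Z.
  by apply/setP=> i; rewrite !inE; case: (i \in X); case: (i \in Y); case: (i \in Z).
rewrite e2 e3 (setIC Z X) (setIC Z Y) cXZ cYZ in e1.
have sZ : Z \subset X :|: Y.
  have : Z :&: (X :|: Y) == Z.
    rewrite eqEcard subsetIl /=; rewrite e1 cZ; move: h1; set t := #|_ :&: _ :&: _|; lia.
  move/eqP=> <-; exact: subsetIr.
move: cU; rewrite (setUidPl sZ) cardsU cX cY cXY; lia.
Qed.

Section Step.
Variables (m : nat) (h h' : {set T} -> {set T}).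
Hypothesis hg : good m.+1 h h'.
Hypothesis hn : m.+3 <= n.

Definition gC (C : {set T}) := \bigcap_(x | x \notin C) h (x |: C).

Lemma card_add (C : {set T}) x : #|C| = m -> x \notin C -> #|x |: C| = m.+1.
Proof using hg hn. by move=> cC xC; rewrite cardsU1 xC cC. Qed.

Lemma h_card A : #|A| = m.+1 -> #|h A| = m.+1.
Proof using hg hn. by move=> cA; case: hg => [[H _] _]; case: (H A cA). Qed.

Lemma h_inv A : #|A| = m.+1 -> h' (h A) = A.
Proof using hg hn. by move=> cA; case: hg => [[H _] _]; case: (H A cA). Qed.

Lemma h_tri A1 A2 A3 : #|A1| = m.+1 -> #|A2| = m.+1 -> #|A3| = m.+1 ->
     #|A1 :|: A2 :|: A3| <= m.+2 -> #|h A1 :|: h A2 :|: h A3| <= m.+2.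
Proof using hg hn. by case: hg => [[_ H] _]; apply: H. Qed.

Lemma h'_tri A1 A2 A3 : #|A1| = m.+1 -> #|A2| = m.+1 -> #|A3| = m.+1 ->
     #|A1 :|: A2 :|: A3| <= m.+2 -> #|h' A1 :|: h' A2 :|: h' A3| <= m.+2.
Proof using hg hn. by case: hg => [_ [_ H]]; apply: H. Qed.

Lemma h'_card A : #|A| = m.+1 -> #|h' A| = m.+1.
Proof using hg hn. by move=> cA; case: hg => [_ [H _]]; case: (H A cA). Qed.

Lemma h'_inv A : #|A| = m.+1 -> h (h' A) = A.
Proof using hg hn. by move=> cA; case: hg => [_ [H _]]; case: (H A cA). Qed.

Lemma pair_card X Y : #|X| = m.+1 -> #|Y| = m.+1 -> X != Y ->
  #|X :|: Y| <= m.+2 -> #|h X :&: h Y| = m.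
Proof using hg hn.
move=> cX cY nXY cU.
have hU : #|h X :|: h Y| <= m.+2 by have := h_tri cX cY cY; rewrite -!setUA !setUid; apply.
have hXY : h X != h Y.
  apply: contra nXY => /eqP e; by rewrite -(h_inv cX) -(h_inv cY) e.
have := cardsU (h X) (h Y); rewrite (h_card cX) (h_card cY) => e.
have : #|h X :&: h Y| < m.+1.
  rewrite -(h_card cX); apply: proper_card; rewrite properEneq subsetIl andbT.
  apply: contra hXY => /eqP e'.
  have sXY : h X \subset h Y by rewrite -e' subsetIr.
  by rewrite eqEcard sXY (h_card cX) (h_card cY) leqnn.
lia.
Qed.

Lemma star C x y z : #|C| = m -> x \notin C -> y \notin C -> z \notin C ->
  x != y -> x != z -> y != z ->
  h (x |: C) :&: h (y |: C) \subset h (z |: C).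
Proof using hg hn.
move=> cC xC yC zC xy xz yz.
have cX := card_add cC xC; have cY := card_add cC yC; have cZ := card_add cC zC.
have cU3 : #|(x |: C) :|: (y |: C) :|: (z |: C)| = m.+3.
  have -> : (x |: C) :|: (y |: C) :|: (z |: C) = x |: (y |: (z |: C)).
    by apply/setP=> i; rewrite !inE; case: (i \in C); case: (i == x); case: (i == y); case: (i == z).
  rewrite cardsU1 cardsU1 cardsU1 !inE (negbTE xC) (negbTE yC) (negbTE zC).
  by rewrite (negbTE xy) (negbTE xz) (negbTE yz) cC.
have cU2 : forall a b, a \notin C -> b \notin C -> a != b -> #|(a |: C) :|: (b |: C)| <= m.+2.
  move=> a b aC bC ab.
  have -> : (a |: C) :|: (b |: C) = a |: (b |: C).
    by apply/setP=> i; rewrite !inE; case: (i \in C); case: (i == a); case: (i == b).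
  by rewrite cardsU1 cardsU1 cC; lia.
have nX : forall a b, a \notin C -> b != a -> (a |: C) != (b |: C).
  move=> a b aC ba; apply/negP => /eqP e.
  have : a \in b |: C by rewrite -e setU11.
  by rewrite !inE (negbTE aC) orbF eq_sym (negbTE ba).
apply: (@tri_core m).
- exact: h_card.
- exact: h_card.
- exact: h_card.
- exact: (pair_card cX cY (nX x y xC ltac:(by rewrite eq_sym)) (cU2 _ _ xC yC xy)).
- exact: (pair_card cX cZ (nX x z xC ltac:(by rewrite eq_sym)) (cU2 _ _ xC zC xz)).
- exact: (pair_card cY cZ (nX y z yC ltac:(by rewrite eq_sym)) (cU2 _ _ yC zC yz)).
rewrite ltnNge; apply/negP => H.
have := h'_tri (h_card cX) (h_card cY) (h_card cZ) H.
by rewrite (h_inv cX) (h_inv cY) (h_inv cZ) cU3 ltnn.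
Qed.

Lemma gC_pair C x y : #|C| = m -> x \notin C -> y \notin C -> x != y ->
  gC C = h (x |: C) :&: h (y |: C).
Proof using hg hn.
move=> cC xC yC xy; apply/eqP; rewrite eqEsubset; apply/andP; split.
  rewrite subsetI; apply/andP; split.
    exact: (@bigcap_inf _ _ x (fun i => i \notin C) (fun i => h (i |: C)) xC).
  exact: (@bigcap_inf _ _ y (fun i => i \notin C) (fun i => h (i |: C)) yC).
apply/bigcapsP => z zC.
case: (eqVneq z x) => [->|zx]; first exact: subsetIl.
case: (eqVneq z y) => [->|zy]; first exact: subsetIr.
by apply: star => //; rewrite eq_sym.
Qed.

Lemma out2 C : #|C| = m -> exists x y, [/\ x \notin C, y \notin C & x != y].
Proof using hg hn.
move=> cC; have hc := cardsC C; rewrite card_ord in hc.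
have [x [y [xC yC xy]]] := @two_elems (~: C) ltac:(by lia).
by exists x, y; rewrite !inE in xC yC.
Qed.

Lemma gC_card C : #|C| = m -> #|gC C| = m.
Proof using hg hn.
move=> cC; have [x [y [xC yC xy]]] := out2 cC.
rewrite (gC_pair cC xC yC xy); apply: pair_card.
- exact: card_add.
- exact: card_add.
- apply/negP => /eqP e.
  have : x \in y |: C by rewrite -e setU11.
  by rewrite !inE (negbTE xC) orbF (negbTE xy).
- have -> : (x |: C) :|: (y |: C) = x |: (y |: C).
    by apply/setP=> i; rewrite !inE; case: (i \in C); case: (i == x); case: (i == y).
  by rewrite cardsU1 cardsU1 cC; lia.
Qed.

Lemma gC_sub C A : #|C| = m -> #|A| = m.+1 -> C \subset A -> gC C \subset h A.
Proof using hg hn.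
move=> cC cA sCA.
have : 0 < #|A :\: C| by rewrite cardsD (setIidPr sCA) cA cC; lia.
case/card_gt0P=> x; rewrite inE => /andP[xC xA].
have -> : A = x |: C.
  apply/esym/eqP; rewrite eqEcard cardsU1 xC cC cA leqnn andbT.
  by rewrite subUset sub1set xA.
exact: (@bigcap_inf _ _ x (fun i => i \notin C) (fun i => h (i |: C)) xC).
Qed.

End Step.

Lemma gC_inv m h h' : good m.+1 h h' -> m.+3 <= n -> forall C, #|C| = m -> gC h' (gC h C) = C.
Proof.
move=> hg hn C cC.
have hg' := good_sym hg.
have [x [y [xC yC xy]]] := out2 hg hn cC.
have cX := card_add hg hn cC xC; have cY := card_add hg hn cC yC.
have cg := gC_card hg hn cC.
have sX := gC_sub hg hn cC cX (subsetUr _ _).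
have sY := gC_sub hg hn cC cY (subsetUr _ _).
have ext : forall X, #|X| = m.+1 -> gC h C \subset h X ->
    exists2 u, u \notin gC h C & h X = u |: gC h C.
  move=> X cXX sgX.
  have : 0 < #|h X :\: gC h C| by rewrite cardsD (setIidPr sgX) (h_card hg hn cXX) cg; lia.
  case/card_gt0P=> u; rewrite inE => /andP[uC uX]; exists u => //.
  apply/esym/eqP; rewrite eqEcard cardsU1 uC cg (h_card hg hn cXX) leqnn andbT.
  by rewrite subUset sub1set uX.
have [u uC eu] := ext _ cX sX.
have [v vC ev] := ext _ cY sY.
have uv : u != v.
  apply/negP => /eqP e; move: eu; rewrite e -ev => e'.
  have := setU11 x C; rewrite -(h_inv hg hn cX) e' (h_inv hg hn cY).
  by rewrite !inE (negbTE xC) orbF (negbTE xy).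
rewrite (gC_pair hg' hn cg uC vC uv) -eu -ev (h_inv hg hn cX) (h_inv hg hn cY).
apply/setP=> i; rewrite !inE; case: (eqVneq i x) => [->|ix].
  by rewrite (negbTE xC) (negbTE xy).
by case: (i \in C); rewrite ?orbT.
Qed.

Lemma gC_tri m h h' : good m.+1 h h' -> m.+3 <= n -> forall C1 C2 C3, #|C1| = m -> #|C2| = m -> #|C3| = m ->
     #|C1 :|: C2 :|: C3| <= m.+1 -> #|gC h C1 :|: gC h C2 :|: gC h C3| <= m.+1.
Proof.
move=> hg hn C1 C2 C3 c1 c2 c3 cU.
have [A [sA cA]] := @extend_set (C1 :|: C2 :|: C3) (m.+1 - #|C1 :|: C2 :|: C3|) ltac:(by lia).
have cA' : #|A| = m.+1 by lia.
rewrite -(h_card hg hn cA'); apply: subset_leq_card.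
have s1 : C1 \subset A by apply: subset_trans sA; rewrite -setUA subsetUl.
have s2 : C2 \subset A by apply: subset_trans sA; rewrite -setUA subsetU // subsetUl orbT.
have s3 : C3 \subset A by apply: subset_trans sA; rewrite subsetUr.
by rewrite !subUset !(gC_sub hg) ?c1 ?c2 ?c3.
Qed.

Lemma step_good m h h' : good m.+1 h h' -> m.+3 <= n ->
  good m (gC h) (gC h').
Proof.
move=> hg hn.
have hg' := good_sym hg.
split; split.
- move=> C cC; split. exact (gC_card hg hn cC). exact (gC_inv hg hn cC).
- exact (gC_tri hg hn).
- move=> C cC; split. exact (gC_card hg' hn cC). exact (gC_inv hg' hn cC).
- exact (gC_tri hg' hn).
Qed.

Lemma rigid m h h' : 1 <= m -> m.+2 <= n -> good m h h' ->
  exists s : {perm T}, forall A, #|A| = m -> h A = s @: A.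
Proof.
elim: m h h' => [//|m IH] h h' _ hn hg.
case: m IH hn hg => [|m] IH hn hg.
  case: hg => [[H _] _].
  pose f := fun i : T => odflt i [pick j in h [set i]].
  have hf : forall i, h [set i] = [set f i].
    move=> i; have [c1 _] := H [set i] (cards1 i).
    case/cards1P: (introT eqP c1) => j ej.
    by rewrite /f ej; case: pickP => [j' |/(_ j)]; rewrite ?inE ?eqxx // => /eqP ->.
  have finj : injective f.
    move=> i j e; have h1 := (H [set i] (cards1 i)).2; have h2 := (H [set j] (cards1 j)).2.
    rewrite hf e -hf h2 in h1.
    by apply/set1P; rewrite h1 set11.
  exists (perm finj) => A /eqP/cards1P [i ->].
  by rewrite imset_set1 permE hf.
have [s Hs] := IH (gC h) (gC h') isT (ltnW hn) (step_good hg hn).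
exists s => A cA.
apply/eqP; rewrite eq_sym eqEcard card_imset ?cA ?(h_card hg hn cA) ?leqnn ?andbT; last exact: perm_inj.
apply/subsetP => _ /imsetP [b bA ->].
have [a [c [aA cA' ac]]] := @two_elems A ltac:(by rewrite cA).
have [a' a'A a'b] : exists2 a', a' \in A & a' != b.
  case: (eqVneq a b) => [eab|nab]; last by exists a.
  by exists c => //; rewrite -eab eq_sym.
have cD : #|A :\ a'| = m.+1 by move: cA; rewrite (cardsD1 a') a'A; lia.
have := gC_sub hg hn cD cA (subsetDl _ _).
rewrite Hs // => /subsetP; apply; apply: imset_f; by rewrite !inE eq_sym a'b.
Qed.

End Rigid.

Section Stab.
Variables (n k : nat).
Local Notation N := n.+1.
Local Notation T := (ordinal N).
Implicit Types A B U : {set T}.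

Definition itv (j l : nat) : {set T} := [set i : T | j <= i < j + l].

Lemma eq_inord (i : T) m : m < N -> (i == inord m) = (i == m :> nat).
Proof. by move=> hm; rewrite -val_eqE /= inordK. Qed.

Lemma card_itv j l : j + l <= N -> #|itv j l| = l.
Proof.
elim: l => [|l IH] hl.
  apply/eqP; rewrite cards_eq0; apply/eqP/setP=> i; rewrite !inE addn0; lia.
have -> : itv j l.+1 = inord (j + l) |: itv j l.
  apply/setP=> i; rewrite !inE eq_inord; lia.
rewrite cardsU1 IH; last lia.
have -> : inord (j + l) \notin itv j l by rewrite inE inordK; lia.
by rewrite add1n.
Qed.

Lemma itvS j l : j + l < N -> itv j l.+1 = inord (j + l) |: itv j l.
Proof. by move=> h; apply/setP=> i; rewrite !inE eq_inord; lia. Qed.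

Variable E : {set T}.
Definition inS (B : {set T}) : bool :=
  [exists j : T, (j + k <= N) && (B == itv j k)] || (B == E).

Lemma inS_itv j : 0 < k -> j + k <= N -> inS (itv j k).
Proof.
move=> k0 hj; apply/orP; left; apply/existsP; exists (inord j).
rewrite inordK ?hj ?eqxx //; lia.
Qed.

Lemma inS_E : inS E.
Proof. by rewrite /inS eqxx orbT. Qed.

Lemma inSP B : inS B -> (exists2 j, j + k <= N & B = itv j k) \/ B = E.
Proof.
case/orP => [/existsP [j /andP[hj /eqP ->]] | /eqP ->]; last by right.
by left; exists j.
Qed.

Section Perm.
Variable s : {perm T}.
Hypothesis HS : forall B, inS (s @: B) = inS B.

Lemma imsetK' B : s^-1%g @: (s @: B) = B.
Proof.
by rewrite -imset_comp (eq_imset _ (fun x => permK s x)) imset_id.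
Qed.

Lemma imsetKV' B : s @: (s^-1%g @: B) = B.
Proof.
by rewrite -imset_comp (eq_imset _ (fun x => permKV s x)) imset_id.
Qed.

Lemma HSV B : inS (s^-1%g @: B) = inS B.
Proof. by rewrite -HS imsetKV'. Qed.

Lemma mem_imp x B : (s x \in s @: B) = (x \in B).
Proof. by rewrite mem_imset //; exact: perm_inj. Qed.

Lemma imsetC' A : s @: (~: A) = ~: (s @: A).
Proof.
apply/setP=> i; rewrite inE -(permKV s i) !mem_imp inE.
by [].
Qed.

Lemma uext (U : {set T}) x : s @: U = U -> x \notin U ->
  (exists B, [/\ inS B, x \in B & B \subset x |: U]) ->
  (forall y, y \notin U -> y != x -> forall B, inS B -> y \in B ->
      exists z, [/\ z \in B, z != y & z \notin U]) -> s x = x.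
Proof.
move=> sU xU [B [SB xB sB]] H.
apply/eqP; apply/negPn/negP => nx.
have sxU : s x \notin U by rewrite -sU mem_imp.
have [z [zB zy zU]] := H (s x) sxU nx (s @: B) ltac:(by rewrite HS) ltac:(by rewrite mem_imp).
have : z \in s x |: U.
  have : s @: B \subset s @: (x |: U) by apply: imsetS.
  by rewrite imsetU1 sU => /subsetP; apply.
by rewrite !inE (negbTE zy) (negbTE zU).
Qed.

Definition onep y := forall B1 B2, inS B1 -> inS B2 -> y \in B1 -> y \in B2 -> B1 = B2.

Lemma onep_inv y : onep y -> onep (s y).
Proof.
move=> H B1 B2 S1 S2 y1 y2.
have e := H (s^-1%g @: B1) (s^-1%g @: B2).
rewrite !HSV in e.
have h1 : y \in s^-1%g @: B1 by rewrite -(permK s y) mem_imset //; exact: perm_inj.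
have h2 : y \in s^-1%g @: B2 by rewrite -(permK s y) mem_imset //; exact: perm_inj.
have := e S1 S2 h1 h2.
by move=> e2; rewrite -(imsetKV' B1) e2 imsetKV'.
Qed.

Definition threep y := exists B1 B2 B3, [/\ inS B1, inS B2, inS B3,
   [/\ y \in B1, y \in B2 & y \in B3] & [/\ B1 != B2, B1 != B3 & B2 != B3]].

Lemma threep_inv y : threep y -> threep (s y).
Proof.
move=> [B1 [B2 [B3 [S1 S2 S3 [y1 y2 y3] [d12 d13 d23]]]]].
have inj := @imset_inj _ _ _ (@perm_inj _ s).
exists (s @: B1), (s @: B2), (s @: B3); split; rewrite ?HS ?mem_imp //.
by split; [move: d12|move: d13|move: d23]; apply: contra => /eqP/inj ->.
Qed.

End Perm.
End Stab.

Section Stab3.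
Variables (n k : nat).
Hypotheses (hk : 3 <= k) (hN : 2 * k + 1 <= n.+1).
Local Notation N := n.+1.
Local Notation T := (ordinal N).
Implicit Types A B U : {set T}.
Definition E3 : {set T} := itv n k 1 :|: itv n (N - k + 1) (k - 1).
Local Notation S := (@inS n k E3).

Lemma mem_E3 (i : T) : (i \in E3) = (i == k :> nat) || (N - k + 1 <= i).
Proof. by rewrite !inE; have := ltn_ord i; lia. Qed.

Lemma card_E3 : #|E3| = k.
Proof.
rewrite cardsU !card_itv; [|lia|lia].
have -> : itv n k 1 :&: itv n (N - k + 1) (k - 1) = set0 by apply/setP=> i; rewrite !inE; lia.
rewrite cards0; lia.
Qed.

Lemma inS_card3 B : S B -> #|B| = k.
Proof. by case/inSP => [[j hj ->]| ->]; [rewrite card_itv | exact card_E3]. Qed.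

Lemma F2 B : S B -> inord 0 \in B -> B = itv n 0 k.
Proof.
case/inSP => [[j hj ->]|->]; rewrite ?mem_E3 ?inE inordK //.
  by move=> h; have -> : j = 0 by lia.
lia.
Qed.

Lemma not_one (y : T) : y != inord 0 -> ~ onep k E3 y.
Proof.
move=> y0 H; have hy := ltn_ord y.
have y1 : 0 < y by move: y0; rewrite eq_inord //; lia.
have k0 : 0 < k by lia.
have SI : forall j, j + k <= N -> S (itv n j k) by move=> j hj; apply: inS_itv.
case: (leqP y (N - k)) => h1.
  have e := H (itv n y.-1 k) (itv n y k) (SI y.-1 ltac:(lia)) (SI y ltac:(lia)).
  have m1 : y \in itv n y.-1 k by rewrite inE; lia.
  have m2 : y \in itv n y k by rewrite inE; lia.
  by move/setP: (e m1 m2) => /(_ (inord y.-1)); rewrite !inE inordK; lia.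
case: (leqP y (N - 2)) => h2.
  have e := H (itv n (N - k - 1) k) (itv n (N - k) k) (SI (N - k - 1) ltac:(lia)) (SI (N - k) ltac:(lia)).
  have m1 : y \in itv n (N - k - 1) k by rewrite inE; lia.
  have m2 : y \in itv n (N - k) k by rewrite inE; lia.
  by move/setP: (e m1 m2) => /(_ (inord (N - k - 1))); rewrite !inE inordK; lia.
have e := H (itv n (N - k) k) E3 (SI (N - k) ltac:(lia)) (inS_E k E3).
have m1 : y \in itv n (N - k) k by rewrite inE; lia.
have m2 : y \in E3 by rewrite mem_E3; lia.
by move/setP: (e m1 m2) => /(_ (inord k)); rewrite mem_E3 !inE inordK; lia.
Qed.

Section P.
Variable s : {perm T}.
Hypothesis HS : forall B, S (s @: B) = S B.

Lemma stepU x : k <= x < N -> s @: itv n 0 x = itv n 0 x -> s (inord x) = inord x.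
Proof.
move=> hx sU; have k0 : 0 < k by lia.
apply: (uext HS sU).
- by rewrite inE inordK; lia.
- exists (itv n (x.+1 - k) k); split.
  + by apply: inS_itv; lia.
  + by rewrite inE inordK; lia.
  + by apply/subsetP => i; rewrite !inE eq_inord; lia.
move=> y; rewrite inE -val_eqE /= inordK; last lia.
move=> yU yx B SB yB; have hy := ltn_ord y.
case/inSP: SB yB => [[j hj ->]|->].
  rewrite inE => yB; case: (ltnP j y) => hjy.
    by exists (inord y.-1); split; rewrite ?mem_E3 ?inE -?val_eqE /= ?inordK; lia.
  by exists (inord y.+1); split; rewrite ?mem_E3 ?inE -?val_eqE /= ?inordK; lia.
rewrite mem_E3 => yE; case: (eqVneq (nat_of_ord y) (N - 1)) => hyN.
  by exists (inord (N - 2)); split; rewrite ?mem_E3 ?inE -?val_eqE /= ?inordK; lia.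
by exists (inord (N - 1)); split; rewrite ?mem_E3 ?inE -?val_eqE /= ?inordK; lia.
Qed.

Definition up_set x : {set T} := [set i : T | x < i].

Lemma stepD x : 1 <= x < k -> s @: up_set x = up_set x -> s (inord x) = inord x.
Proof.
move=> hx sU; have k0 : 0 < k by lia.
apply: (uext HS sU).
- by rewrite inE inordK; lia.
- exists (itv n x k); split.
  + by apply: inS_itv; lia.
  + by rewrite inE inordK; lia.
  + by apply/subsetP => i; rewrite !inE eq_inord; lia.
move=> y; rewrite inE -val_eqE /= inordK; last lia.
move=> yU yx B SB yB; have hy := ltn_ord y.
case/inSP: SB yB => [[j hj ->]|->].
  rewrite inE => yB; case: (ltnP j y) => hjy.
    by exists (inord y.-1); split; rewrite ?mem_E3 ?inE -?val_eqE /= ?inordK; lia.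
  by exists (inord y.+1); split; rewrite ?mem_E3 ?inE -?val_eqE /= ?inordK; lia.
rewrite mem_E3 => yE; lia.
Qed.

End P.

Lemma stab3 (s : {perm T}) : (forall B, #|B| = k -> S (s @: B) = S B) -> s = 1%g.
Proof.
move=> HSk.
have cB : forall B, #|s @: B| = #|B| by move=> B; rewrite card_imset //; exact: perm_inj.
have HS : forall B, S (s @: B) = S B.
  move=> B; case: (eqVneq #|B| k) => [/HSk //| nk].
  apply/idP/idP => h; move/negP: nk; case; apply/eqP; [rewrite -cB|]; exact: inS_card3 h.
have k0 : 0 < k by lia.
have one0 : onep k E3 (inord 0).
  by move=> B1 B2 S1 S2 m1 m2; rewrite (F2 S1 m1) (F2 S2 m2).
have s0 : s (inord 0) = inord 0.
  apply/eqP; apply/negPn/negP => ne; exact: (not_one ne (onep_inv HS one0)).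
have sI0 : s @: itv n 0 k = itv n 0 k.
  apply: F2; [rewrite HS; apply: inS_itv; lia | rewrite -s0 mem_imp inE inordK; lia].
have up : forall d, k + d <= N -> s @: itv n 0 (k + d) = itv n 0 (k + d).
  elim=> [|d IH] hd; first by rewrite addn0.
  have hx : k + d < N by lia.
  rewrite addnS itvS /= ?add0n // imsetU1 IH ?(stepU HS _ (IH _)) //; lia.
have fixU : forall x, k <= x < N -> s (inord x) = inord x.
  move=> x hx; apply: (stepU HS hx).
  by have := up (x - k) ltac:(lia); rewrite subnKC //; lia.
have down : forall d, d < k -> s @: up_set (k - 1 - d) = up_set (k - 1 - d).
  elim=> [|d IH] hd.
    have -> : up_set (k - 1 - 0) = ~: itv n 0 k by apply/setP=> i; rewrite !inE; lia.
    by rewrite imsetC' sI0.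
  have -> : up_set (k - 1 - d.+1) = inord (k - 1 - d) |: up_set (k - 1 - d).
    by apply/setP=> i; rewrite !inE eq_inord; lia.
  rewrite imsetU1 IH ?(stepD HS _ (IH _)) //; lia.
have fixD : forall x, 1 <= x < k -> s (inord x) = inord x.
  move=> x hx; apply: (stepD HS hx).
  by have := down (k - 1 - x) ltac:(lia); have -> : k - 1 - (k - 1 - x) = x by lia.
apply/permP => i; rewrite perm1 -(inord_val i).
case: (posnP i) => [i0|ip]; first by rewrite i0.
case: (ltnP i k) => ik; [apply: fixD|apply: fixU]; have := ltn_ord i; lia.
Qed.

End Stab3.

Section Stab2.
Variables (n : nat).
Hypotheses (hN : 6 <= n.+1).
Local Notation N := n.+1.
Local Notation T := (ordinal N).
Implicit Types A B U : {set T}.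
Definition E2 : {set T} := itv n 1 1 :|: itv n 3 1.
Local Notation S := (@inS n 2 E2).

Lemma mem_E2 (i : T) : (i \in E2) = (i == 1 :> nat) || (i == 3 :> nat).
Proof. by rewrite !inE; lia. Qed.

Lemma card_E2 : #|E2| = 2.
Proof.
rewrite cardsU !card_itv; [|lia|lia].
have -> : itv n 1 1 :&: itv n 3 1 = set0 by apply/setP=> i; rewrite !inE; lia.
by rewrite cards0.
Qed.

Lemma inS_card2 B : S B -> #|B| = 2.
Proof. by case/inSP => [[j hj ->]| ->]; [rewrite card_itv | exact card_E2]. Qed.

Lemma SI2 j : j + 2 <= N -> S (itv n j 2).
Proof. by move=> hj; apply: inS_itv. Qed.

Lemma end0 B : S B -> inord 0 \in B -> B = itv n 0 2.
Proof.
case/inSP => [[j hj ->]|->]; rewrite ?mem_E2 ?inE inordK //; try lia.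
by move=> h; have -> : j = 0 by lia.
Qed.

Lemma endN B : S B -> inord (N - 1) \in B -> B = itv n (N - 2) 2.
Proof.
case/inSP => [[j hj ->]|->]; rewrite ?mem_E2 ?inE inordK //; try lia.
by move=> h; have -> : j = N - 2 by lia.
Qed.

Lemma one_pts (y : T) : onep 2 E2 y -> (y == 0 :> nat) || (y == N - 1 :> nat).
Proof.
move=> H; have hy := ltn_ord y; apply/negPn/negP => hn.
have m1 : y \in itv n y.-1 2 by rewrite inE; lia.
have m2 : y \in itv n y 2 by rewrite inE; lia.
have e := H _ _ (SI2 (j:=y.-1) ltac:(lia)) (SI2 (j:=y) ltac:(lia)) m1 m2.
by move/setP: e => /(_ (inord y.-1)); rewrite !inE inordK; lia.
Qed.

Lemma three1 : threep 2 E2 (inord 1).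
Proof.
exists (itv n 0 2), (itv n 1 2), E2; split.
- by apply: SI2; lia.
- by apply: SI2; lia.
- exact: inS_E.
- by split; rewrite ?mem_E2 ?inE inordK //; lia.
split.
- by apply/negP => /eqP/setP/(_ (inord 0)); rewrite !inE inordK; lia.
- by apply/negP => /eqP/setP/(_ (inord 0)); rewrite mem_E2 !inE inordK; lia.
- by apply/negP => /eqP/setP/(_ (inord 2)); rewrite mem_E2 !inE inordK; lia.
Qed.

Lemma not_three : ~ threep 2 E2 (inord (N - 2)).
Proof.
move=> [B1 [B2 [B3 [S1 S2 S3 [y1 y2 y3] [d12 d13 d23]]]]].
have cl : forall B, S B -> inord (N - 2) \in B -> B = itv n (N - 3) 2 \/ B = itv n (N - 2) 2.
  move=> B; case/inSP => [[j hj ->]|->]; rewrite ?mem_E2 ?inE inordK; try lia.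
  by move=> h; case: (ltnP j (N - 2)) => hj'; [left|right]; congr itv; lia.
move: d12 d13 d23.
by case: (cl _ S1 y1) => ->; case: (cl _ S2 y2) => ->; case: (cl _ S3 y3) => ->;
  rewrite ?eqxx.
Qed.

Definition up_set2 x : {set T} := [set i : T | x < i].

Section P2.
Variable s : {perm T}.
Hypothesis HS : forall B, S (s @: B) = S B.

Lemma stepD2 x : 3 <= x <= N - 2 -> s @: up_set2 x = up_set2 x -> s (inord x) = inord x.
Proof.
move=> hx sU.
apply: (uext HS sU).
- by rewrite inE inordK; lia.
- exists (itv n x 2); split.
  + by apply: SI2; lia.
  + by rewrite inE inordK; lia.
  + by apply/subsetP => i; rewrite !inE eq_inord; lia.
move=> y; rewrite inE -val_eqE /= inordK; last lia.
move=> yU yx B SB yB; have hy := ltn_ord y.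
case/inSP: SB yB => [[j hj ->]|->].
  rewrite inE => yB; case: (ltnP j y) => hjy.
    by exists (inord y.-1); split; rewrite ?mem_E2 ?inE -?val_eqE /= ?inordK; lia.
  by exists (inord y.+1); split; rewrite ?mem_E2 ?inE -?val_eqE /= ?inordK; lia.
rewrite mem_E2 => yE; case: (eqVneq (nat_of_ord y) 1) => hy1.
  by exists (inord 3); split; rewrite ?mem_E2 ?inE -?val_eqE /= ?inordK; lia.
by exists (inord 1); split; rewrite ?mem_E2 ?inE -?val_eqE /= ?inordK; lia.
Qed.
End P2.

Lemma stab2 (s : {perm T}) : (forall B, #|B| = 2 -> S (s @: B) = S B) -> s = 1%g.
Proof.
move=> HSk.
have cB : forall B, #|s @: B| = #|B| by move=> B; rewrite card_imset //; exact: perm_inj.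
have HS : forall B, S (s @: B) = S B.
  move=> B; case: (eqVneq #|B| 2) => [/HSk //| nk].
  apply/idP/idP => h; move/negP: nk; case; apply/eqP; [rewrite -cB|]; exact: inS_card2 h.
have sinj : forall a b, (s a == s b) = (a == b).
  by move=> a b; apply/eqP/eqP => [/perm_inj|->].
have one0 : onep 2 E2 (inord 0).
  by move=> B1 B2 S1 S2 m1 m2; rewrite (end0 S1 m1) (end0 S2 m2).
have oneN : onep 2 E2 (inord (N - 1)).
  by move=> B1 B2 S1 S2 m1 m2; rewrite (endN S1 m1) (endN S2 m2).
have mI : forall j (i : T) m, m < N -> (inord m \in itv n j 2) = (j <= m < j + 2).
  by move=> j i m hm; rewrite inE inordK //; lia.
have s0 : s (inord 0) = inord 0.
  have := one_pts (onep_inv HS one0); case/orP => [/eqP h|/eqP h].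
    by apply/val_inj; rewrite /= h inordK //; lia.
  exfalso.
  have e : s @: itv n 0 2 = itv n (N - 2) 2.
    apply: endN; first by rewrite HS; apply: SI2; lia.
    have -> : inord (N - 1) = s (inord 0) by apply/val_inj; rewrite /= h inordK //; lia.
    by rewrite mem_imp inE inordK //; lia.
  have h1 : s (inord 1) \in itv n (N - 2) 2 by rewrite -e mem_imp inE inordK //; lia.
  have h1' : (s (inord 1) : nat) = N - 2.
    move: h1; rewrite inE => h1.
    have : s (inord 1) != s (inord 0) by rewrite sinj -val_eqE /= !inordK //; lia.
    rewrite -val_eqE /= h; lia.
  apply: not_three; have -> : inord (N - 2) = s (inord 1) by apply/val_inj; rewrite /= h1' inordK; lia.
  exact (threep_inv HS three1).
have sN : s (inord (N - 1)) = inord (N - 1).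
  have := one_pts (onep_inv HS oneN); case/orP => [/eqP h|/eqP h].
    exfalso; have : s (inord (N - 1)) != s (inord 0) by rewrite sinj -val_eqE /= !inordK; lia.
    by rewrite s0 -val_eqE /= h inordK //; lia.
  by apply/val_inj; rewrite /= h inordK //; lia.
have sI0 : s @: itv n 0 2 = itv n 0 2.
  apply: end0; [rewrite HS; apply: SI2; lia | rewrite -s0 mem_imp inE inordK; lia].
have s1 : s (inord 1) = inord 1.
  have h1 : s (inord 1) \in itv n 0 2 by rewrite -sI0 mem_imp inE inordK //; lia.
  have : s (inord 1) != s (inord 0) by rewrite sinj -val_eqE /= !inordK //; lia.
  rewrite s0 => hne; apply/val_inj; rewrite /= inordK; last lia.
  move: h1 hne; rewrite inE -val_eqE /= inordK //; lia.
have down : forall d, d <= N - 4 -> s @: up_set2 (N - 2 - d) = up_set2 (N - 2 - d).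
  elim=> [|d IH] hd.
    have -> : up_set2 (N - 2 - 0) = [set inord (N - 1)].
      by apply/setP=> i; rewrite !inE eq_inord; have := ltn_ord i; lia.
    by rewrite imset_set1 sN.
  have -> : up_set2 (N - 2 - d.+1) = inord (N - 2 - d) |: up_set2 (N - 2 - d).
    by apply/setP=> i; rewrite !inE eq_inord; lia.
  rewrite imsetU1 IH ?(stepD2 HS _ (IH _)) //; lia.
have fixD : forall x, 3 <= x <= N - 2 -> s (inord x) = inord x.
  move=> x hx; apply: (stepD2 HS hx).
  by have := down (N - 2 - x) ltac:(lia); have -> : N - 2 - (N - 2 - x) = x by lia.
have s2 : s (inord 2) = inord 2.
  have U2 := down (N - 4) (leqnn _).
  rewrite (_ : N - 2 - (N - 4) = 2) in U2; last lia.
  have h2 : s (inord 2) \notin up_set2 2 by rewrite -U2 mem_imp inE inordK //; lia.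
  have : s (inord 2) != s (inord 0) by rewrite sinj -val_eqE /= !inordK //; lia.
  have : s (inord 2) != s (inord 1) by rewrite sinj -val_eqE /= !inordK //; lia.
  rewrite s0 s1 => hne1 hne0; apply/val_inj; rewrite /= inordK; last lia.
  move: h2 hne1 hne0; rewrite inE -!val_eqE /= !inordK //; lia.
apply/permP => i; rewrite perm1 -(inord_val i); have := ltn_ord i.
case: (ltnP i 3) => i3.
  case: (ltnP i 1) => i1; first by have -> : nat_of_ord i = 0 by lia.
  case: (ltnP i 2) => i2; first by have -> : nat_of_ord i = 1 by lia.
  by have -> : nat_of_ord i = 2 by lia.
case: (ltnP i (N - 1)) => iN; first by move=> hi; apply: fixD; lia.
by move=> hi; have -> : nat_of_ord i = N - 1 by lia.
Qed.

End Stab2.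

Section Main.
Variables (n k : nat).
Hypothesis hk : 2 <= k.
Hypothesis hN : k.*2.+1 <= n.+1.
Hypothesis h6 : k = 2 -> 6 <= n.+1.
Local Notation N := n.+1.
Local Notation V := (LGvert N k).
Local Notation e := (@LGadj N k).

Lemma vsz (v : V) : #|val v| = k.-1 \/ #|val v| = k.
Proof. by case/orP: (valP v) => /eqP ->; [left|right]. Qed.

Lemma km1 : k.-1 != k.
Proof. lia. Qed.

Definition mkV (A : {set 'I_N}) (h : (#|A| == k.-1) || (#|A| == k)) : V := exist _ A h.

Lemma adjL (u w : V) : #|val u| = k.-1 -> e u w = (#|val w| == k) && (val u \subset val w).
Proof.
move=> cu; rewrite /LGadj cu eqxx (negbTE km1) /=.
by rewrite andbF orbF.
Qed.

Lemma adj_sym (u w : V) : e u w = e w u.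
Proof. by rewrite /LGadj orbC. Qed.

Lemma cardD1k (A : {set 'I_N}) a : a \in A -> #|A| = k -> #|A :\ a| = k.-1.
Proof. by move=> aA cA; move: cA; rewrite (cardsD1 a) aA; lia. Qed.

Lemma cardU1k (A : {set 'I_N}) a : a \notin A -> #|A| = k.-1 -> #|a |: A| = k.
Proof. by move=> aA cA; rewrite cardsU1 aA cA; lia. Qed.

Lemma liftP (s : {perm 'I_N}) (v : V) :
  (#|s @: val v| == k.-1) || (#|s @: val v| == k).
Proof.
have cI : #|s @: val v| = #|val v| by rewrite card_imset //; exact: perm_inj.
by rewrite cI; exact: (valP v).
Qed.

Definition liftf (s : {perm 'I_N}) (v : V) : V := exist _ (s @: val v) (liftP s v).

Lemma liftf_inj s : injective (liftf s).
Proof.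
move=> u v /(congr1 val) /= e1; apply/val_inj.
exact: (imset_inj (@perm_inj _ s) e1).
Qed.

Definition liftp s : {perm V} := perm (@liftf_inj s).

Lemma subset_imsetP (s : {perm 'I_N}) (A B : {set 'I_N}) : (s @: A \subset s @: B) = (A \subset B).
Proof.
apply/idP/idP; last exact: imsetS.
by move/(imsetS (s^-1)%g); rewrite !imsetK'.
Qed.

Lemma liftp_aut s : graph_aut e (liftp s).
Proof.
move=> x y; rewrite !permE /LGadj /= !card_imset; try exact: perm_inj.
by rewrite !subset_imsetP.
Qed.

Lemma swap_key (a b : 'I_N) (v : V) : a != b -> a \in val v -> b \notin val v ->
  exists w : V, e v w /\ e (liftf (tperm a b) v) w.
Proof.
move=> ab av bv.
have cT : #|tperm a b @: val v| = #|val v| by rewrite card_imset //; exact: perm_inj.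
case: (vsz v) => cv.
- have cw : #|b |: val v| = k by apply: cardU1k.
  exists (mkV (introT orP (or_intror (introT eqP cw)))); split.
    by rewrite adjL // /= cw eqxx subsetUr.
  rewrite adjL /= ?cT // cw eqxx /=.
  apply/subsetP => _ /imsetP [x xv ->]; rewrite !inE.
  case: tpermP => [_|ex|nxa nxb]; first by rewrite eqxx.
    by move: xv; rewrite ex (negbTE bv).
  by rewrite xv orbT.
- have cw : #|val v :\ a| = k.-1 by apply: cardD1k.
  exists (mkV (introT orP (or_introl (introT eqP cw)))); split.
    by rewrite adj_sym adjL // /= cv eqxx subsetDl.
  rewrite adj_sym adjL //= cT cv eqxx /=.
  apply/subsetP => x; rewrite !inE => /andP[xa xv].
  have xb : x != b by apply: contraNneq bv => <-.
  have e1 : tperm a b x = x by apply: tpermD; rewrite eq_sym.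
  by rewrite -{1}e1 mem_imset //; exact: perm_inj.
Qed.

Lemma swap_fix (a b : 'I_N) (v : V) : (a \in val v) = (b \in val v) ->
  liftf (tperm a b) v = v.
Proof.
move=> hab; apply/val_inj => /=.
apply/eqP; rewrite eqEcard card_imset ?leqnn ?andbT; last exact: perm_inj.
apply/subsetP => _ /imsetP [x xv ->].
case: tpermP => [ex|ex|//]; first by rewrite -hab -ex.
by rewrite hab -ex.
Qed.

Lemma two_col m (x y z : 'I_m) : m <= 2 -> x != y -> z != y -> z = x.
Proof.
move=> hm; case: x y z => [a ha] [b hb] [c' hc].
rewrite -!val_eqE /= => h1 h2; apply/val_inj => /=; lia.
Qed.

Lemma lower m (c : V -> 'I_m) : proper_col e c -> distinguishing e c -> 3 <= m.
Proof.
move=> pc dc; rewrite leqNgt; apply/negP; rewrite ltnS => m2.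
pose p : 'I_N := ord0; pose q : 'I_N := ord_max.
have pq : p != q by rewrite /p /q -val_eqE /=; lia.
pose t := tperm p q.
have colf : forall v, c (liftp t v) = c v.
  move=> v; rewrite permE.
  case: (boolP (p \in val v)) => pv; case: (boolP (q \in val v)) => qv;
    try (by rewrite swap_fix // pv qv); try (by rewrite swap_fix // (negbTE pv) (negbTE qv)).
  - have [w [h1 h2]] := swap_key pq pv qv.
    exact: two_col m2 (pc _ _ h1) (pc _ _ h2).
  - have qp : q != p by rewrite eq_sym.
    have [w [h1 h2]] := swap_key qp qv pv.
    rewrite tpermC in h2.
    exact: two_col m2 (pc _ _ h1) (pc _ _ h2).
have := dc _ (liftp_aut t) colf => t1.
have cA : #|itv n 0 k.-1| = k.-1 by rewrite card_itv; lia.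
pose v0 := mkV (introT orP (or_introl (introT eqP cA))).
have := congr1 val (congr1 (fun f : {perm V} => f v0) t1).
rewrite perm1 permE /= => e0.
have : t p \in t @: itv n 0 k.-1 by apply: imset_f; rewrite inE /p /=; lia.
by rewrite e0 tpermL inE /q /=; lia.
Qed.


Definition inSk (B : {set 'I_N}) : bool :=
  if k == 2 then inS 2 (E2 n) B else inS k (E3 n k) B.

Definition col (v : V) : 'I_3 :=
  if #|val v| == k.-1 then ord0 else if inSk (val v) then inord 2 else inord 1.

Lemma col0 v : (col v == ord0) = (#|val v| == k.-1).
Proof.
rewrite /col; case: ifP => // _.
by case: ifP => _; rewrite -val_eqE /= inordK.
Qed.

Lemma kk1 : (k == k.-1) = false.
Proof. lia. Qed.

Lemma col_proper : proper_col e col.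
Proof.
move=> x y; rewrite /LGadj => /orP [/and3P[cx cy _] | /and3P[cy cx _]];
  apply/negP => /eqP exy.
  by have := col0 y; rewrite -exy (eqP cy) kk1 col0 cx.
by have := col0 x; rewrite exy (eqP cx) kk1 col0 cy.
Qed.

Definition hf (f : {perm V}) (A : {set 'I_N}) : {set 'I_N} :=
  oapp (fun v : V => val (f v)) A (insub A).

Lemma hfE f (v : V) : hf f (val v) = val (f v).
Proof. by rewrite /hf valK. Qed.

Lemma half_f (f g : {perm V}) : graph_aut e f -> (forall v, #|val (f v)| = #|val v|) ->
  (forall v, g (f v) = v) -> half k.-1 (hf f) (hf g).
Proof.
move=> fa szf gf; split.
  move=> A cA; pose v := mkV (introT orP (or_introl (introT eqP cA))).
  have -> : A = val v by [].
  by rewrite !hfE szf gf.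
move=> A1 A2 A3 c1 c2 c3 cU.
pose v1 := mkV (introT orP (or_introl (introT eqP c1))).
pose v2 := mkV (introT orP (or_introl (introT eqP c2))).
pose v3 := mkV (introT orP (or_introl (introT eqP c3))).
have [B [sB cB]] := @extend_set N (A1 :|: A2 :|: A3) (k - #|A1 :|: A2 :|: A3|) ltac:(lia).
have cB' : #|B| = k by lia.
pose w := mkV (introT orP (or_intror (introT eqP cB'))).
have sub : forall v : V, #|val v| = k.-1 -> val v \subset B -> val (f v) \subset val (f w).
  move=> v cv svB.
  have : e v w by rewrite adjL // /= cB' eqxx.
  by rewrite -fa adjL ?szf // => /andP[_].
have s1 : A1 \subset B by apply: subset_trans sB; rewrite -setUA subsetUl.
have s2 : A2 \subset B by apply: subset_trans sB; rewrite -setUA subsetU // subsetUl orbT.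
have s3 : A3 \subset B by apply: subset_trans sB; rewrite subsetUr.
have -> : A1 = val v1 by []. have -> : A2 = val v2 by []. have -> : A3 = val v3 by [].
rewrite !hfE.
apply: (@leq_trans #|val (f w)|); last by rewrite szf /= cB'; lia.
by apply: subset_leq_card; rewrite !subUset !sub.
Qed.

Lemma upper_dist : distinguishing e col.
Proof.
move=> f fa fc.
have fa' : graph_aut e (f^-1)%g.
  by move=> x y; rewrite -(fa ((f^-1)%g x) ((f^-1)%g y)) !permKV.
have fc' : forall x, col ((f^-1)%g x) = col x.
  by move=> x; rewrite -{2}(permKV f x) fc.
have szgen : forall g : {perm V}, (forall x, col (g x) = col x) ->
    forall v, #|val (g v)| = #|val v|.
  move=> g gc v; have := gc v => /(congr1 (fun c => c == ord0)); rewrite !col0.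
  by case: (vsz v) => ->; case: (vsz (g v)) => ->; rewrite ?eqxx ?kk1 // eq_sym kk1.
have szf := szgen f fc; have szf' := szgen _ fc'.
have hg : good k.-1 (hf f) (hf (f^-1)%g).
  split; apply: half_f => //; [exact: permK | exact: permKV].
have [s Hs] := @rigid N k.-1 _ _ ltac:(lia) ltac:(lia) hg.
have HL : forall v : V, #|val v| = k.-1 -> val (f v) = s @: val v.
  by move=> v cv; rewrite -hfE Hs.
have HR : forall v : V, #|val v| = k -> val (f v) = s @: val v.
  move=> w cw.
  have [p [q [pw qw pq]]] := @two_elems N (val w) ltac:(lia).
  have sub : forall a, a \in val w -> s @: (val w :\ a) \subset val (f w).
    move=> a aw; have ca := cardD1k aw cw.
    pose u := mkV (introT orP (or_introl (introT eqP ca))).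
    have : e u w by rewrite adjL // cw eqxx subsetDl.
    rewrite -fa adjL ?szf // => /andP[_].
    by have -> : val (f u) = s @: (val w :\ a) by rewrite HL.
  apply/esym/eqP; rewrite eqEcard card_imset ?szf ?leqnn ?andbT; last exact: perm_inj.
  apply/subsetP => _ /imsetP [x xw ->].
  case: (eqVneq x p) => [xp|xp].
    apply: (subsetP (sub _ qw)); apply: imset_f; rewrite !inE xw andbT xp.
    exact: pq.
  by apply: (subsetP (sub _ pw)); apply: imset_f; rewrite !inE xw xp.
have Hall : forall v : V, val (f v) = s @: val v by move=> v; case: (vsz v) => cv; [exact: HL | exact: HR].
have HS : forall B : {set 'I_N}, #|B| = k -> inSk (s @: B) = inSk B.
  move=> B cB; pose w := mkV (introT orP (or_intror (introT eqP cB))).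
  have := fc w; rewrite /col szf Hall /= cB kk1.
  by case: (inSk _); case: (inSk _) => // /(congr1 val); rewrite /= !inordK.
have s1 : s = 1%g.
  case: (eqVneq k 2) => k2.
    rewrite /inSk k2 eqxx in HS.
    exact: (stab2 (h6 k2) HS).
  rewrite /inSk (negbTE k2) in HS.
  exact: (@stab3 n k ltac:(lia) ltac:(lia) s HS).
apply/permP => v; apply/val_inj; rewrite Hall s1 perm1.
by rewrite (eq_imset _ (@perm1 _)) imset_id.
Qed.

Theorem chiD3 : chiD_is e 3.
Proof.
split; last by move=> m [c [pc dc]]; exact: lower pc dc.
by exists col; split; [exact: col_proper | exact: upper_dist].
Qed.

End Main.

Theorem mainTheorem4 (k n : nat) :
  2 <= k -> n0 k <= n -> chiD_is (@LGadj n k) 3.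
Proof.
move=> hk; rewrite /n0.
case: n => [|n] hn; first by case: (k == 2) hn; lia.
apply: chiD3 => //.
- by case: (eqVneq k 2) hn => [->|k2] /=; lia.
- by move=> k2; move: hn; rewrite k2.
Qed.
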